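(* Let $k\ge 2$, let $\epsilon>0$ and let $1\le r<k$. For all sufficiently large $n$ (as a function of $\epsilon$ and $k$), for $T\sim\mathcal{R}(n,k)$ the probability that there exist a permutation $\pi$ of $V(T)$, a perfect $r$-set $P$, a subset $R\subseteq P$ with $|R|\ge\epsilon n$ and a subset $S\subseteq A_{r+1}$ with $|S|\ge \epsilon n$ such that the event $X(T,\pi,P,R,S)$ occurs, is at most $\frac{1}{kn}$.
   Context: $\mathcal{R}(n,k)$ is the probability space of $k$-partite tournaments with vertex classes $A_1,\ldots,A_k$ of size $n$ each, every edge between distinct classes oriented independently and uniformly at random. For a permutation (bijection) $\pi:V(T)\to\{1,\ldots,kn\}$, $L_\pi(T)$ is the spanning subgraph of $T$ consisting of all edges $(u,v)\in E(T)$ with $\pi(u)<\pi(v)$, viewed as undirected. For $1\le r\le k$, a perfect $r$-set is a set $P$ of $n$ pairwise disjoint $r$-tuples $(a_1,\ldots,a_r)$ with $a_i\in A_i$ for each $i$. For $1\le r<k$, a perfect $r$-set $P$ and $\pi$, $L_\pi(P,T)$ is the bipartite graph with parts $P$ and $A_{r+1}$ in which $p=(a_1,\ldots,a_r)\in P$ and $v\in A_{r+1}$ are adjacent iff $\{v,a_i\}$ is an edge of $L_\pi(T)$ for every $i=1,\ldots,r$. For $R\subseteq P$ and $S\subseteq A_{r+1}$, $X(T,\pi,P,R,S)$ is the event that $L_\pi(P,T)$ has fewer than $|R||S|/2^{r+1}$ edges between $R$ and $S$. *)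

(* Defs.v *)
From HB Require Import structures.
From mathcomp Require Import all_boot all_order all_algebra.
From mathcomp Require Import reals.
Set Implicit Arguments. Unset Strict Implicit. Unset Printing Implicit Defensive.
Import Order.TTheory GRing.Theory Num.Theory.

(* Vertices of the k-partite tournament: vertex (i, j) is the j-th vertex of
   class A_i (classes indexed 0..k-1, so A_1,...,A_k of the paper are
   indices 0,...,k-1). *)
Definition vert (k n : nat) := ('I_k * 'I_n)%type.

(* Unordered pairs of vertices in distinct classes, represented by the
   ordered pair whose first vertex lies in the smaller class. *)
Definition xpair (k n : nat) :=
  {p : vert k n * vert k n | (nat_of_ord p.1.1 < nat_of_ord p.2.1)%N}.

(* Sample space of R(n,k): an orientation bit for each such pair,
   true meaning the edge is oriented from p.1 to p.2.  The uniform
   distribution on this finite set is exactly the product of independent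
   fair orientations. *)
Definition orient (k n : nat) := {ffun xpair k n -> bool}.

Definition arc k n (T : orient k n) (u v : vert k n) : bool :=
  match insub (u, v) : option (xpair k n) with
  | Some p => T p
  | None =>
      match insub (v, u) : option (xpair k n) with
      | Some q => ~~ T q
      | None => false
      end
  end.

(* {u,v} is an edge of L_pi(T). pi : V(T) -> {1..kn} bijection, encoded as
   an injective map into 'I_(k*n) (0-based, order preserved). *)
Definition Ledge k n (T : orient k n) (pi : {ffun vert k n -> 'I_(k * n)})
  (u v : vert k n) : bool :=
  (arc T u v && (pi u < pi v)%N) || (arc T v u && (pi v < pi u)%N).

(* An r-tuple (a_1,...,a_r) with a_i in A_i is encoded by the indices of
   the a_i inside their classes. *)
Definition rtuple (r n : nat) := {ffun 'I_r -> 'I_n}.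

Definition rcls (k r : nat) (hrk : (r < k)%N) (i : 'I_r) : 'I_k :=
  widen_ord (ltnW hrk) i.

Definition vtx_of_tuple k n r (hrk : (r < k)%N) (p : rtuple r n) (i : 'I_r)
  : vert k n := (rcls hrk i, p i).

Definition perfect_rset (r n : nat) (P : {set rtuple r n}) : bool :=
  (#|P| == n) &&
  [forall p in P, forall q in P, (p != q) ==> [forall i, p i != q i]].

Definition nextcls (k r : nat) (hrk : (r < k)%N) : 'I_k := Ordinal hrk.

Definition Ladj k n r (hrk : (r < k)%N) (T : orient k n)
  (pi : {ffun vert k n -> 'I_(k * n)}) (p : rtuple r n) (j : 'I_n) : bool :=
  [forall i : 'I_r, Ledge T pi (vtx_of_tuple hrk p i) (nextcls hrk, j)].

Definition edges_between k n r (hrk : (r < k)%N) (T : orient k n)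
  (pi : {ffun vert k n -> 'I_(k * n)}) (R : {set rtuple r n}) (S : {set 'I_n})
  : nat :=
  #|[set x : rtuple r n * 'I_n | (x.1 \in R) && (x.2 \in S) && Ladj hrk T pi x.1 x.2]|.

(* the event X(T,pi,P,R,S) (P is implicit: R is a subset of P) *)
Definition eventX (RR : realType) k n r (hrk : (r < k)%N) (T : orient k n)
  (pi : {ffun vert k n -> 'I_(k * n)}) (R : {set rtuple r n}) (S : {set 'I_n})
  : bool :=
  ((edges_between hrk T pi R S)%:R < (#|R| * #|S|)%:R / 2 ^+ r.+1 :> RR)%R.

Definition bad (RR : realType) (eps : RR) k n r (hrk : (r < k)%N)
  (T : orient k n) : bool :=
  [exists pi : {ffun vert k n -> 'I_(k * n)},
   [exists P : {set rtuple r n},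
    [exists R : {set rtuple r n},
     [exists S : {set 'I_n},
      [&& injectiveb pi, perfect_rset P, R \subset P,
          (eps * n%:R <= #|R|%:R)%R, (eps * n%:R <= #|S|%:R)%R
        & eventX RR hrk T pi R S]]]]].

Definition prob (RR : realType) k n (E : pred (orient k n)) : RR :=
  (#|[set T : orient k n | E T]|%:R / #|{: orient k n}|%:R)%R.

(* Main.v *)
Require Import Defs.
From HB Require Import structures.
From mathcomp Require Import all_boot all_order all_algebra.
From mathcomp Require Import reals.
From mathcomp Require Import zify ring lra.
Import Order.TTheory GRing.Theory Num.Theory.
Set Implicit Arguments. Unset Strict Implicit. Unset Printing Implicit Defensive.

Section Indep.
Variables (RR : realType) (E : finType) (r : nat).
Local Open Scope ring_scope.

Definition flip (D : {set E}) (T : {ffun E -> bool}) : {ffun E -> bool} :=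
  [ffun e => T e (+) (e \in D)].
Lemma flipK D : involutive (flip D).
Proof. by move=> T; apply/ffunP => e; rewrite !ffunE addbK. Qed.

Definition proj (eg : 'I_r -> E) (T : {ffun E -> bool}) : {ffun 'I_r -> bool} :=
  [ffun i => T (eg i)].

Lemma L2 (eg : 'I_r -> E) (sg : {ffun 'I_r -> bool}) (H : {ffun E -> bool} -> RR) :
  injective eg ->
  (forall T T' : {ffun E -> bool}, (forall e, (forall i, e != eg i) -> T e = T' e) -> H T = H T') ->
  \sum_T H T = (2 ^ r)%:R * \sum_T (if proj eg T == sg then H T else 0).
Proof.
move=> inj hH.
transitivity (\sum_T \sum_(x : {ffun 'I_r -> bool}) (if x == proj eg T then H T else 0)).
  by apply eq_bigr => T _; rewrite -big_mkcond /= big_pred1_eq.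
rewrite exchange_big /=.
transitivity (\sum_(x : {ffun 'I_r -> bool}) \sum_T (if proj eg T == sg then H T else 0)).
  apply eq_bigr => x _.
  pose D := [set e | [exists i, (e == eg i) && (x i != sg i)]].
  rewrite (reindex_inj (inv_inj (flipK D))) /=.
  apply eq_bigr => T _.
  have hD : forall i, (eg i \in D) = (x i != sg i).
    move=> i; rewrite inE; apply/existsP/idP => [[j /andP[/eqP/inj -> //]]|h].
    by exists i; rewrite eqxx.
  have -> : (x == proj eg (flip D T)) = (proj eg T == sg).
    apply/eqP/eqP => [h|h]; apply/ffunP => i.
      move/ffunP: h => /(_ i); rewrite !ffunE hD.
      by case: (x i) (sg i) (T (eg i)) => [] [] [].
    move/ffunP: h => /(_ i); rewrite !ffunE hD.
    by case: (x i) (sg i) (T (eg i)) => [] [] [].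
  case: eqP => // _; symmetry; apply: hH => e he; rewrite ffunE.
  have -> : (e \in D) = false.
    apply/negbTE; rewrite inE; apply/existsP => -[i /andP[/eqP h _]].
    by move: (he i); rewrite h eqxx.
  by rewrite addbF.
rewrite sumr_const card_ffun card_bool card_ord.
by rewrite mulr_natl.
Qed.

Lemma L3 (G : eqType) (s : seq G) (eg : G -> 'I_r -> E)
  (sg : G -> {ffun 'I_r -> bool}) (w : RR) :
  uniq s -> {in s, forall g, injective (eg g)} ->
  {in s &, forall g g' i i', eg g i = eg g' i' -> g = g'} ->
  \sum_T \prod_(g <- s) (if proj (eg g) T == sg g then w else 1) =
  (1 - (1 - w) / (2 ^ r)%:R) ^+ size s * #|{: {ffun E -> bool}}|%:R.
Proof.
elim: s => [|g0 s IH] /=.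
  by move=> _ _ _; rewrite expr0 mul1r; under eq_bigr do rewrite big_nil; rewrite sumr_const.
move=> /andP[g0s us] hinj hdis.
have mem_behead : forall g, g \in s -> g \in g0 :: s by move=> g h; rewrite in_cons h orbT.
have IH' := IH us (fun g gs => hinj g (mem_behead g gs))
  (fun g g' gs g's => hdis g g' (mem_behead g gs) (mem_behead g' g's)).
set H := fun T : {ffun E -> bool} => \prod_(g <- s) (if proj (eg g) T == sg g then w else 1).
have hH : forall T T' : {ffun E -> bool}, (forall e, (forall i, e != eg g0 i) -> T e = T' e) -> H T = H T'.
  move=> T T' hT; rewrite /H; apply: eq_big_seq => g gs.
  have -> : proj (eg g) T = proj (eg g) T'; last by [].
  apply/ffunP => i; rewrite !ffunE; apply: hT => j; apply/eqP => h.
  have := hdis g g0 (mem_behead g gs) (mem_head _ _) i j h.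
  by move=> e; move: g0s; rewrite -e gs.
have := @L2 (eg g0) (sg g0) H (hinj g0 (mem_head _ _)) hH.
have p2 : (2 ^ r)%:R != 0 :> RR by rewrite pnatr_eq0 expn_eq0.
move=> e2.
transitivity (\sum_T (H T - (1 - w) * (if proj (eg g0) T == sg g0 then H T else 0))).
  apply: eq_bigr => T _; rewrite big_cons; case: ifP => _ /=; rewrite /H; ring.
rewrite sumrB -mulr_sumr.
have -> : \sum_T (if proj (eg g0) T == sg g0 then H T else 0) = (\sum_T H T) / (2 ^ r)%:R.
  by rewrite e2 mulrC mulKf.
rewrite /H IH' exprS; field.
exact: p2.
Qed.
End Indep.

Section Num.
Variable RR : realType.
Local Open Scope ring_scope.

Lemma bern (y : RR) N : 0 <= y -> 1 + N%:R * y <= (1 + y) ^+ N.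
Proof.
move=> y0; elim: N => [|N IH]; first by rewrite expr0 mul0r addr0.
rewrite exprS -natr1.
have h1 : 0 <= (1 + y) by lra.
have h2 : 0 <= N%:R * y by apply: mulr_ge0.
nra.
Qed.

Lemma cpow (s : nat) : (0 < s)%N ->
  let c := 1 - 1 / (3 * s%:R) : RR in
  0 <= c /\ c <= 1 /\ c ^+ (2 * s) <= 3 / 5.
Proof.
move=> s0 c.
have sp : 1 <= s%:R :> RR by rewrite ler1n.
set y := 1 / (3 * s%:R) : RR.
have y0 : 0 <= y by rewrite /y divr_ge0 // mulr_ge0 // ler0n.
have y1 : y <= 1 / 3.
  rewrite /y ler_pdivrMr ?mulr_gt0 //; last by lra.
  by nra.
split; first by rewrite /c -/y; lra.
split; first by rewrite /c -/y; lra.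
have hb := @bern y (2 * s)%N y0.
have hy : (2 * s)%:R * y = 2 / 3.
  by rewrite /y natrM; field; rewrite pnatr_eq0 -lt0n.
rewrite hy in hb.
have hp : (c * (1 + y)) ^+ (2 * s) <= 1.
  apply: exprn_ile1; rewrite /c -/y; nra.
rewrite exprMn in hp.
have cp : 0 <= c ^+ (2 * s) by apply: exprn_ge0; rewrite /c -/y; lra.
nra.
Qed.
End Num.

Section Tail.
Variables (RR : realType) (E : finType) (r : nat).
Local Open Scope ring_scope.

Lemma prod_pow (G : eqType) (s : seq G) (Y : G -> bool) (w : RR) :
  \prod_(g <- s) (if Y g then w else 1) = w ^+ (\sum_(g <- s) (Y g : nat))%N.
Proof.
elim: s => [|g s IH]; first by rewrite !big_nil.
by rewrite !big_cons IH exprD; case: (Y g) => //=; rewrite mul1r.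
Qed.

Lemma tail (G : eqType) (s : seq G) (eg : G -> 'I_r -> E)
  (sg : G -> {ffun 'I_r -> bool}) (a : nat) :
  uniq s -> {in s, forall g, injective (eg g)} ->
  {in s &, forall g g' i i', eg g i = eg g' i' -> g = g'} ->
  (2 * 2 ^ r * a <= size s)%N ->
  #|[set T : {ffun E -> bool} |
      (\sum_(g <- s) (proj (eg g) T == sg g : nat) <= a)%N]|%:R
  <= (9 / 10) ^+ a * #|{: {ffun E -> bool}}|%:R :> RR.
Proof.
move=> us hinj hdis ha.
set w : RR := 2 / 3.
set A := [set T : {ffun E -> bool} | _].
set O := #|{: {ffun E -> bool}}|%:R : RR.
set X := fun T : {ffun E -> bool} => (\sum_(g <- s) (proj (eg g) T == sg g : nat))%N.
have hL3 := @L3 RR E r G s eg sg w us hinj hdis.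
have hw0 : 0 <= w by rewrite /w; lra.
have hw1 : w <= 1 by rewrite /w; lra.
have key : #|A|%:R * w ^+ a <= \sum_T w ^+ X T.
  rewrite (bigID (fun T => T \in A)) /=.
  have h2 : 0 <= \sum_(T | T \notin A) w ^+ X T by apply: sumr_ge0 => T _; exact: exprn_ge0.
  suff : #|A|%:R * w ^+ a <= \sum_(T | T \in A) w ^+ X T by lra.
  rewrite -sum1_card natr_sum mulr_suml; apply: ler_sum => T; rewrite inE => hT.
  by rewrite mul1r; apply: ler_wiXn2l.
have eq1 : \sum_T w ^+ X T = (1 - (1 - w) / (2 ^ r)%:R) ^+ size s * O.
  by rewrite -hL3; apply: eq_bigr => T _; rewrite prod_pow.
have [c0 [c1 c35]] := @cpow RR (2 ^ r)%N (expn_gt0 2 r).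
set c := 1 - 1 / (3 * (2 ^ r)%:R) : RR.
have ce : 1 - (1 - w) / (2 ^ r)%:R = c.
  rewrite /c /w; field; rewrite pnatr_eq0 expn_eq0 //.
rewrite ce in eq1.
have cm : c ^+ size s <= (3 / 5) ^+ a.
  apply: (le_trans (ler_wiXn2l c0 c1 ha)).
  rewrite exprM; apply: (lerXn2r a) => //; rewrite nnegrE; last by lra.
  by apply: exprn_ge0.
have O0 : 0 <= O by rewrite /O ler0n.
have wa : 0 < w ^+ a by apply: exprn_gt0; rewrite /w; lra.
have : #|A|%:R * w ^+ a <= (3 / 5) ^+ a * O.
  apply: (le_trans key); rewrite eq1; apply: ler_wpM2r => //.
have -> : (9 / 10 : RR) ^+ a = (3 / 5) ^+ a / w ^+ a.
  by rewrite -expr_div_n /w; congr (_ ^+ _); field.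
move=> h; rewrite mulrAC ler_pdivlMr //.
Qed.
End Tail.



Section Spec.
Variables (k n r : nat) (hrk : (r < k)%N).

Definition eg (g : rtuple r n * 'I_n) (i : 'I_r) : xpair k n :=
  @exist _ _ (vtx_of_tuple hrk g.1 i, (nextcls hrk, g.2)) (ltn_ord i).

Definition sgf (pi : {ffun vert k n -> 'I_(k * n)}) (g : rtuple r n * 'I_n) : {ffun 'I_r -> bool} :=
  [ffun i => (pi (vtx_of_tuple hrk g.1 i) < pi (nextcls hrk, g.2))%N].

Lemma arc_lt (T : orient k n) (u v : vert k n) (h : (nat_of_ord u.1 < nat_of_ord v.1)%N) :
  Defs.arc T u v = T (exist _ (u, v) h) /\ Defs.arc T v u = ~~ T (exist _ (u, v) h).
Proof.
rewrite /Defs.arc; split.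
  case: insubP => [p _ pv|] /=; last by rewrite h.
  by congr (T _); apply: val_inj.
case: insubP => [p /= hp _|_]; first by move: (ltn_trans h hp); rewrite ltnn.
case: insubP => [p _ pv|] /=; last by rewrite h.
by congr (~~ T _); apply: val_inj.
Qed.

Lemma Ledge_eq (T : orient k n) (pi : {ffun vert k n -> 'I_(k * n)}) (g : rtuple r n * 'I_n) (i : 'I_r) : injective pi ->
  Ledge T pi (vtx_of_tuple hrk g.1 i) (nextcls hrk, g.2) = (T (eg g i) == sgf pi g i).
Proof.
move=> ipi; rewrite /Ledge ffunE.
have [-> ->] := arc_lt T (ltn_ord i : (nat_of_ord (vtx_of_tuple hrk g.1 i).1 < nat_of_ord (nextcls hrk, g.2).1)%N).
have E : forall h, (@exist _ (fun p : vert k n * vert k n => (nat_of_ord p.1.1 < nat_of_ord p.2.1)%N) (@pair (vert k n) (vert k n) (vtx_of_tuple hrk g.1 i) (nextcls hrk, g.2)) h) = eg g i.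
  by move=> h; apply: val_inj.
rewrite E.
have ne : (pi (vtx_of_tuple hrk g.1 i) : nat) != pi (nextcls hrk, g.2).
  apply/eqP => /val_inj /ipi h0; have /= h := congr1 (fun x : vert k n => nat_of_ord x.1) h0.
  by move: (ltn_ord i); rewrite h ltnn.
move: ne; case: (ltngtP (pi (vtx_of_tuple hrk g.1 i) : nat) (pi (nextcls hrk, g.2))) => _ //=; rewrite ?andbT ?andbF ?orbF //=; by case: (T (eg g i)).
Qed.

Lemma Ladj_eq (T : orient k n) (pi : {ffun vert k n -> 'I_(k * n)}) (g : rtuple r n * 'I_n) :
  injective pi -> Ladj hrk T pi g.1 g.2 = (proj (eg g) T == sgf pi g).
Proof.
move=> ipi; rewrite /Ladj; apply/forallP/eqP => [h|h].
  apply/ffunP => i; rewrite [LHS]ffunE; apply/eqP; rewrite -Ledge_eq //; exact: h i.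
move=> i; rewrite Ledge_eq //; move/ffunP: h => /(_ i); rewrite ffunE => ->; exact: eqxx.
Qed.

Definition disj (R : {set rtuple r n}) :=
  [forall p in R, forall q in R, (p != q) ==> [forall i, p i != q i]].

Lemma per_triple (RR : realType) (pi : {ffun vert k n -> 'I_(k * n)})
  (R : {set rtuple r n}) (S : {set 'I_n}) : injective pi -> disj R ->
  (#|[set T : orient k n | eventX RR hrk T pi R S]|%:R
   <= (9 / 10) ^+ ((#|R| * #|S|) %/ (2 * 2 ^ r)) * #|{: orient k n}|%:R :> RR)%R.
Proof.
move=> ipi dR.
set a := ((#|R| * #|S|) %/ (2 * 2 ^ r))%N.
have hinj : {in enum (setX R S), forall g, injective (eg g)}.
  move=> g _ i i' h0; have /= h := congr1 (fun x : xpair k n => nat_of_ord (val x).1.1) h0.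
  exact: ord_inj.
have hdis : {in enum (setX R S) &, forall g g' i i', eg g i = eg g' i' -> g = g'}.
  move=> [p j] [p' j']; rewrite !mem_enum !in_setX /= => /andP[pR jS] /andP[p'R j'S] i i' h0; have /= [hi hpi hj] := congr1 val h0.
  have ii : i = i' by apply: ord_inj.
  subst i'; rewrite hj; congr (_, _).
  apply/eqP; apply: contraT => hne.
  move/forallP: dR => /(_ p); rewrite pR /= => /forallP /(_ p'); rewrite p'R hne /= => /forallP /(_ i).
  by rewrite hpi eqxx.
have hsz : (2 * 2 ^ r * a <= size (enum (setX R S)))%N.
  by rewrite -cardE cardsX mulnC leq_trunc_div.
have := @tail RR (xpair k n) r _ (enum (setX R S)) eg (sgf pi) a (enum_uniq _) hinj hdis hsz.
apply: le_trans; rewrite ler_nat; apply: subset_leq_card; apply/subsetP => T; rewrite !inE => hX.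
have -> : (\sum_(g <- enum (setX R S)) (proj (eg g) T == sgf pi g : nat))%N = edges_between hrk T pi R S.
  rewrite big_enum /= /edges_between -sum1_card [RHS]big_mkcond /=.
  rewrite [LHS]big_mkcond /=; apply: eq_bigr => g _; rewrite !inE -Ladj_eq //.
  by case: (g.1 \in R) (g.2 \in S) (Ladj hrk T pi g.1 g.2) => [] [] [].
move: hX; rewrite /eventX => hX.
have h2 : (0 < 2 ^+ r.+1 :> RR)%R by apply: exprn_gt0.
rewrite ltr_pdivlMr // -natrX -natrM ltr_nat in hX.
rewrite /a leq_divRL ?muln_gt0 ?expn_gt0 //; rewrite expnS in hX; exact: ltnW.
Qed.
End Spec.



Lemma leq_expb m n e : (m <= n)%N -> (m ^ e <= n ^ e)%N.
Proof. by case: e => [//|e] h; rewrite leq_exp2r. Qed.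

Lemma sq_le_pow q : (q.+4 ^ 2 <= 2 ^ q.+4)%N.
Proof.
elim: q => [//|q IH].
rewrite expnS.
have : (q.+4.+1 ^ 2 <= 2 * q.+4 ^ 2)%N.
  rewrite !expnS !expn0 !muln1; nia.
move=> h; apply: (leq_trans h); rewrite leq_mul2l /=; exact: IH.
Qed.

Lemma growth c K : (0 < K)%N -> forall n, (K * (2 * c * K + 4) <= n)%N -> (c * n <= 2 ^ (n %/ K))%N.
Proof.
move=> K0 n hn.
have hq : (2 * c * K + 4 <= n %/ K)%N by rewrite leq_divRL // mulnC.
have hnq : (n < (n %/ K).+1 * K)%N by exact: ltn_ceil.
move: hq hnq; set q := (n %/ K)%N => hq hnq.
have h1 : (c * n <= c * K * q.+1)%N.
  rewrite -mulnA leq_mul2l; apply/orP; right; rewrite mulnC; exact: ltnW.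
apply: (leq_trans h1).
have h2 : (c * K * q.+1 <= (2 * c * K) * q)%N.
  rewrite -!mulnA [(2 * _)%N]mulnC -!mulnA leq_mul2l; apply/orP; right.
  rewrite leq_mul2l; apply/orP; right.
  have : (4 <= q)%N by apply: leq_trans hq; rewrite leq_addl.
  by clear; lia.
apply: (leq_trans h2).
have h3 : (2 * c * K * q <= q ^ 2)%N.
  rewrite expnS expn1 leq_mul2r; apply/orP; right; by apply: leq_trans hq; rewrite leq_addr.
apply: (leq_trans h3).
have [q' ->] : exists q', q = q'.+4.
  exists (q - 4)%N. by move: hq; clear; lia.
exact: sq_le_pow.
Qed.

Lemma natbound k r n d : (2 <= k)%N -> (1 <= r)%N -> (1 <= d)%N ->
  ((14 * 2 ^ r * d ^ 2) * (k + r + 2)) * (2 * (2 * k) * ((14 * 2 ^ r * d ^ 2) * (k + r + 2)) + 4) <= n ->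
  (k * n * ((k * n) ^ (k * n) * (n ^ r + 1) ^ n * 2 ^ n) <= 2 ^ (n ^ 2 %/ (14 * 2 ^ r * d ^ 2)))%N.
Proof.
set D := (14 * 2 ^ r * d ^ 2)%N; set B := (k + r + 2)%N; set K := (D * B)%N.
move=> hk hr hd hn.
have D0 : (0 < D)%N by rewrite /D !muln_gt0 ?expn_gt0 /= ?hd ?orbT.
have K0 : (0 < K)%N by rewrite /K muln_gt0 D0 /B addn_gt0 orbT.
have n1 : (1 <= n)%N.
  apply: leq_trans hn; rewrite muln_gt0 K0 /=; by rewrite addn_gt0 orbT.
set Q := (2 * k * n)%N.
have hQ : (Q <= 2 ^ (n %/ K))%N by rewrite /Q; apply: growth.
have Q2 : (2 <= Q)%N by rewrite /Q -[2%N]muln1 -mulnA leq_mul2l /= muln_gt0 n1 andbT; apply: leq_trans hk.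
have Q0 : (0 < Q)%N by apply: leq_trans Q2.
have e1 : (k * n <= Q)%N by rewrite /Q -mulnA leq_pmull.
have e2 : ((k * n) ^ (k * n) <= Q ^ (k * n))%N by apply: leq_expb.
have e3 : ((n ^ r + 1) ^ n <= Q ^ (r * n))%N.
  rewrite expnM; apply: leq_expb.
  have : (n ^ r + 1 <= (2 * n) ^ r)%N.
    rewrite expnMn.
    have h2 : (2 <= 2 ^ r)%N by rewrite -{1}(expn1 2) leq_pexp2l.
    have h3 : (1 <= n ^ r)%N by rewrite expn_gt0 n1.
    nia.
  move=> h; apply: (leq_trans h); apply: leq_expb.
  by rewrite /Q -mulnA leq_mul2l /= leq_pmull // ltnW.
have e4 : (2 ^ n <= Q ^ n)%N by apply: leq_expb.
have e5 : (k * n * ((k * n) ^ (k * n) * (n ^ r + 1) ^ n * 2 ^ n) <= Q ^ (1 + k * n + r * n + n))%N.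
  apply: (leq_trans (leq_mul e1 (leq_mul (leq_mul e2 e3) e4))).
  by rewrite !expnD expn1 !mulnA.
apply: (leq_trans e5).
have e6 : (Q ^ (1 + k * n + r * n + n) <= Q ^ (B * n))%N.
  apply: leq_pexp2l => //; rewrite /B !mulnDl; nia.
apply: (leq_trans e6).
apply: (leq_trans (leq_expb (B * n) hQ)).
rewrite -expnM; apply: leq_pexp2l => //.
rewrite leq_divRL //.
have -> : (n %/ K * (B * n) * D = (n %/ K * K) * n)%N by rewrite /K; ring.
by rewrite expnS expn1 leq_mul2r leq_trunc_div orbT.
Qed.

Lemma union_bound (A B : finType) (P : B -> pred A) (Q : pred A) :
  (forall x, Q x -> exists y, P y x) ->
  (#|[set x | Q x]| <= \sum_y #|[set x | P y x]|)%N.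
Proof.
move=> h.
rewrite -sum1_card big_mkcond /=.
under [X in (_ <= X)%N]eq_bigr do rewrite -sum1_card big_mkcond /=.
rewrite exchange_big /=; apply: leq_sum => x _; rewrite inE.
case: ifP => // /h [y hy]; rewrite (bigD1 y) //= inE hy; exact: leq_addr.
Qed.



Unset Implicit Arguments.

Theorem lemma4p4 (RR : realType) (k : nat) (hk : (2 <= k)%N)
  (eps : RR) (heps : (0 < eps)%R) (r : nat) (hr1 : (1 <= r)%N) (hrk : (r < k)%N) :
  exists N : nat, forall n : nat, (N <= n)%N ->
    (prob RR (@bad RR eps k n r hrk) <= 1 / (k * n)%:R)%R.
Proof.
Local Open Scope ring_scope.
have [d [d1 hd]] : exists d : nat, (1 <= d)%N /\ (1 <= d%:R * eps)%R.
  have e0 : (0 <= eps^-1)%R by rewrite invr_ge0 ltW.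
  have := archi_boundP e0; set d := Num.Def.archi_bound _ => hd.
  exists d; split.
    have : (0 < d%:R :> RR)%R by apply: (lt_trans _ hd); rewrite invr_gt0.
    by rewrite ltr0n.
  have : (eps^-1 * eps <= d%:R * eps)%R by rewrite ler_pM2r // ltW.
  by rewrite mulVf // gt_eqF.
set D := (14 * 2 ^ r * d ^ 2)%N; set B := (k + r + 2)%N; set K := (D * B)%N.
exists (K * (2 * (2 * k) * K + 4))%N => n hn.
have hnb := natbound hk hr1 d1 hn.
rewrite -/D in hnb.
set b0 := (n ^ 2 %/ D)%N in hnb.
have D0 : (0 < D)%N by rewrite /D !muln_gt0 ?expn_gt0 /= ?d1 ?orbT.
have K0 : (0 < K)%N by rewrite /K muln_gt0 D0 /B addn_gt0 orbT.
have n1 : (1 <= n)%N.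
  apply: leq_trans hn; rewrite muln_gt0 K0 /=; by rewrite addn_gt0 orbT.
have i0 : 'I_r := Ordinal hr1.
pose Trip := ({ffun vert k n -> 'I_(k * n)} * {ffun 'I_n -> option (rtuple r n)} * {set 'I_n})%type.
pose Rf (f : {ffun 'I_n -> option (rtuple r n)}) := [set p | [exists j, f j == Some p]].
pose C (t : Trip) (T : orient k n) :=
  [&& injectiveb t.1.1, disj (Rf t.1.2), (eps * n%:R <= #|Rf t.1.2|%:R)%R,
      (eps * n%:R <= #|t.2|%:R)%R & eventX RR hrk T t.1.1 (Rf t.1.2) t.2].
have step1 : forall T, bad eps hrk T -> exists t, C t T.
  move=> T /existsP [pi /existsP [P /existsP [R /existsP [S /and5P [ipi pP RP hR /andP [hS hX]]]]]].
  have dR : disj R.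
    move: pP => /andP [_ /forallP hP].
    apply/forallP => p; apply/implyP => pR; apply/forallP => q; apply/implyP => qR.
    have := hP p; rewrite (subsetP RP p pR) /= => /forallP /(_ q).
    by rewrite (subsetP RP q qR).
  pose f := [ffun j => [pick p in R | p i0 == j]].
  have hRf : Rf f = R.
    apply/setP => p; rewrite inE; apply/existsP/idP.
      move=> [j /eqP]; rewrite ffunE; case: pickP => [q /andP[qR _] [<-] //| _ //].
    move=> pR; exists (p i0); rewrite ffunE; case: pickP => [q /andP[qR /eqP hq]| h].
      apply/eqP; congr Some; apply/eqP; apply: contraT => hne.
      move/forallP: dR => /(_ q); rewrite qR /= => /forallP /(_ p); rewrite pR hne /= => /forallP /(_ i0).
      by rewrite hq eqxx.
    by move: (h p); rewrite pR eqxx.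
  exists (pi, f, S); rewrite /C /= hRf; apply/and5P; split => //.
have step2 := @union_bound (orient k n) Trip C (bad eps hrk) step1.
set O := (#|{: orient k n}|%:R : RR).
have step3 : forall t, (#|[set T | C t T]|%:R <= (9 / 10) ^+ (7 * b0) * O :> RR)%R.
  move=> [[pi f] S] /=.
  have O0 : (0 <= O)%R by rewrite ler0n.
  case hc : [&& injectiveb pi, disj (Rf f), (eps * n%:R <= #|Rf f|%:R)%R & (eps * n%:R <= #|S|%:R)%R]; last first.
    have -> : [set T | C (pi, f, S) T] = set0.
      apply/setP => T; rewrite !inE /C /=.
      by apply/negP => /and5P [h1 h2 h3 h4 _]; rewrite h1 h2 h3 h4 in hc.
    by rewrite cards0; apply: mulr_ge0 => //; apply: exprn_ge0; lra.
  move/and4P: hc => [/injectiveP ipi dR hR hS].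
  have -> : [set T | C (pi, f, S) T] = [set T | eventX RR hrk T pi (Rf f) S].
    have ib : injectiveb pi by apply/injectiveP.
    by apply/setP => T; rewrite !inE /C /= ib dR hR hS.
  apply: (le_trans (per_triple hrk RR S ipi dR)).
  apply: ler_wpM2r => //.
  apply: ler_wiXn2l; [lra | lra |].
  have nR : (n <= d * #|Rf f|)%N.
    rewrite -(ler_nat RR) natrM.
    apply: le_trans (_ : (d%:R * (eps * n%:R) <= _)%R); last by rewrite ler_pM2l // ltr0n.
    rewrite mulrA; rewrite -{1}(mul1r n%:R); apply: ler_wpM2r => //; exact: ler0n.
  have nS : (n <= d * #|S|)%N.
    rewrite -(ler_nat RR) natrM.
    apply: le_trans (_ : (d%:R * (eps * n%:R) <= _)%R); last by rewrite ler_pM2l // ltr0n.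
    rewrite mulrA; rewrite -{1}(mul1r n%:R); apply: ler_wpM2r => //; exact: ler0n.
  rewrite leq_divRL ?muln_gt0 ?expn_gt0 //.
  have h1 : (b0 * D <= n ^ 2)%N by rewrite /b0 leq_trunc_div.
  have h2 : (n ^ 2 <= d ^ 2 * (#|Rf f| * #|S|))%N.
    by rewrite expnS expn1 expnS expn1 mulnACA leq_mul.
  have h3 : (7 * b0 * (2 * 2 ^ r) * d ^ 2 = b0 * D)%N by rewrite /D; ring.
  rewrite -(leq_pmul2r (_ : (0 < d ^ 2)%N)) ?expn_gt0 ?d1 // h3 mulnC.
  rewrite [(D * b0)%N]mulnC [X in (_ <= X)%N]mulnC; exact: leq_trans h1 h2.
have cardT : #|{: Trip}| = ((k * n) ^ (k * n) * (n ^ r + 1) ^ n * 2 ^ n)%N.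
  rewrite !card_prod !card_ffun !card_ord card_option card_ffun !card_ord.
  have -> : #|{: vert k n}| = (k * n)%N by rewrite /vert card_prod !card_ord.
  by rewrite -cardsT -powersetT card_powerset cardsT card_ord addn1.
have Opos : (0 < O)%R by rewrite /O ltr0n; apply/card_gt0P; exists [ffun=> true].
have hbad : (#|[set T : orient k n | bad eps hrk T]|%:R <= #|{: Trip}|%:R * ((9 / 10) ^+ (7 * b0) * O) :> RR)%R.
  apply: (@le_trans _ _ (\sum_t (#|[set T | C t T]|%:R : RR))).
    by rewrite -natr_sum ler_nat.
  apply: (@le_trans _ _ (\sum_(t : Trip) ((9 / 10) ^+ (7 * b0) * O))).
    by apply: ler_sum => t _; exact: step3.
  rewrite sumr_const [X in _ <= X]mulr_natl; rewrite le_eqVlt; apply/orP; left; apply/eqP; congr (_ *+ _); exact: eq_card.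
rewrite /prob.
have kn0 : (0 < (k * n)%:R :> RR)%R by rewrite ltr0n muln_gt0 n1 andbT; apply: leq_trans hk.
set M := #|{: Trip}| in hbad cardT.
have e97 : ((9 / 10 : RR) ^+ (7 * b0) <= (1 / 2) ^+ b0)%R.
  rewrite exprM; apply: (lerXn2r b0); rewrite ?nnegrE; [by apply: exprn_ge0; lra | lra |].
  rewrite !exprS expr0; lra.
have hMb : (M%:R * (1 / 2) ^+ b0 <= 1 / (k * n)%:R :> RR)%R.
  rewrite expr_div_n expr1n mulrA mulr1 ler_pdivrMr ?exprn_gt0 // mulrAC mul1r ler_pdivlMr //.
  rewrite -natrX -natrM ler_nat cardT mulnC; exact: hnb.
apply: le_trans hMb.
rewrite ler_pdivrMr //.
apply: (le_trans hbad).
rewrite -mulrA; apply: ler_wpM2l; first exact: ler0n.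
by apply: ler_wpM2r => //; exact: ltW.
Qed.
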